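(* Let $\mathbb{A}$ be a 2-category having the two-dimensional cokernel diagram of a 1-cell $p:e\to b$. Then: (1) $p$ is monadic if and only if $p$ has a left adjoint and $p$ is an effective faithful morphism; (2) $p$ is comonadic if and only if $p$ has a right adjoint and $p$ is an effective faithful morphism.
   Context: A 2-category is a $\mathbf{Cat}$-enriched category; composition of 1-cells is juxtaposition, vertical composition of 2-cells is $\cdot$, horizontal composition is $\ast$, $\mathrm{id}_f$ is the identity 2-cell on $f$. $\mathbb{A}^{\mathrm{co}}$ is obtained by reversing 2-cells. A 1-cell is an equivalence if it has a pseudo-inverse up to invertible 2-cells. Adjunctions in $\mathbb{A}$ are given by unit and counit 2-cells satisfying the triangle identities. Opcomma object of $p$ along itself: $b\uparrow_p b$ with $\delta^0,\delta^1:b\to b\uparrow_pb$ and $\alpha:\delta^1p\Rightarrow\delta^0p$ such that for every $y$, $h\mapsto(h\delta^0,h\delta^1,\mathrm{id}_h\ast\alpha)$, $\xi\mapsto(\xi\ast\mathrm{id}_{\delta^0},\xi\ast\mathrm{id}_{\delta^1})$ is an isomorphism from $\mathbb{A}(b\uparrow_pb,y)$ onto the category of triples $(h_0,h_1:b\to y,\beta:h_1p\Rightarrow h_0p)$ with morphisms pairs $(\xi_0,\xi_1)$ with $(\xi_0\ast\mathrm{id}_p)\cdot\beta=\beta'\cdot(\xi_1\ast\mathrm{id}_p)$. A two-dimensional pushout of a span $f_0:c\to c_0$, $f_1:c\to c_1$ is $P$ with $q_0,q_1$, $q_0f_0=q_1f_1$, such that $k\mapsto(kq_0,kq_1)$ is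 an isomorphism from $\mathbb{A}(P,y)$ onto the category of pairs $(k_0,k_1)$ with $k_0f_0=k_1f_1$ and morphisms pairs of 2-cells $(\xi_0,\xi_1)$ with $\xi_0\ast\mathrm{id}_{f_0}=\xi_1\ast\mathrm{id}_{f_1}$. $\mathbb{A}$ has the two-dimensional cokernel diagram of $p$ if it has $b\uparrow_pb$ and a two-dimensional pushout $b\uparrow_pb\uparrow_pb$ of $(\delta^0,\delta^1)$ with $D^0,D^2$, $D^2\delta^0=D^0\delta^1$; $D^1$ is the unique 1-cell with $D^1\delta^1=D^2\delta^1$, $D^1\delta^0=D^0\delta^0$, $\mathrm{id}_{D^1}\ast\alpha=(\mathrm{id}_{D^0}\ast\alpha)\cdot(\mathrm{id}_{D^2}\ast\alpha)$; $s^0$ is the unique 1-cell with $s^0\delta^0=s^0\delta^1=\mathrm{id}_b$, $\mathrm{id}_{s^0}\ast\alpha=\mathrm{id}_p$. Effective faithful: $\mathrm{Desc}_p(y)$ has objects $(h:y\to b,\beta:\delta^1h\Rightarrow\delta^0h)$ with $(\mathrm{id}_{D^0}\ast\beta)\cdot(\mathrm{id}_{D^2}\ast\beta)=\mathrm{id}_{D^1}\ast\beta$, $\mathrm{id}_{s^0}\ast\beta=\mathrm{id}_h$, morphisms 2-cells $\xi:h_1\Rightarrow h_0$ with $\beta_0\cdot(\mathrm{id}_{\delta^1}\ast\xi)=(\mathrm{id}_{\delta^0}\ast\xi)\cdot\beta_1$; a lax descent object is $L$ with $d:L\to b$, $\Psi:\delta^1d\Rightarrow\delta^0d$ such that $g\mapsto(dg,\Psi\ast\mathrm{id}_g)$,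 $\xi\mapsto\mathrm{id}_d\ast\xi$ is an isomorphism $\mathbb{A}(y,L)\cong\mathrm{Desc}_p(y)$ for all $y$; $p^H$ is unique with $dp^H=p$, $\Psi\ast\mathrm{id}_{p^H}=\alpha$. $p$ is an effective faithful morphism if $\mathbb{A}$ has the two-dimensional cokernel diagram of $p$, a lax descent object of it, and $p^H$ is an equivalence. Monadic: a right Kan extension of $f$ along $g$ is $(r,\gamma:rg\Rightarrow f)$ with $\beta\mapsto\gamma\cdot(\beta\ast\mathrm{id}_g)$ bijective from 2-cells $k\Rightarrow r$ to 2-cells $kg\Rightarrow f$. The codensity monad of $p$ is $(b,t,m,\eta)$ where $(t,\gamma)$ is a right Kan extension of $p$ along $p$, $m$ unique with $\gamma\cdot(m\ast\mathrm{id}_p)=\gamma\cdot(\mathrm{id}_t\ast\gamma)$, $\eta$ unique with $\gamma\cdot(\eta\ast\mathrm{id}_p)=\mathrm{id}_p$. An Eilenberg–Moore object of $\mathsf{T}=(b,t,m,\eta)$ is $b^{\mathsf{T}}$ with $u:b^{\mathsf{T}}\to b$, $\mu:tu\Rightarrow u$ such that $g\mapsto(ug,\mu\ast\mathrm{id}_g)$ is an isomorphism from $\mathbb{A}(y,b^{\mathsf{T}})$ onto the category of pairs $(h,\beta:th\Rightarrow h)$ with $\beta\cdot(\mathrm{id}_t\ast\beta)=\beta\cdot(m\ast\mathrm{id}_h)$, $\beta\cdot(\eta\ast\mathrm{id}_h)=\mathrm{id}_h$ (morphisms $\xi$ with $\xi\cdot\beta_1=\beta_0\cdot(\mathrm{id}_t\ast\xi)$).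 $p$ is monadic if it has a codensity monad $\mathsf{T}$, $\mathbb{A}$ has an Eilenberg–Moore object of $\mathsf{T}$, and the unique $p^{\mathsf{T}}$ with $up^{\mathsf{T}}=p$, $\mu\ast\mathrm{id}_{p^{\mathsf{T}}}=\gamma$ is an equivalence. $p$ is comonadic if the corresponding 1-cell of $\mathbb{A}^{\mathrm{co}}$ is monadic in $\mathbb{A}^{\mathrm{co}}$. *)

(* Defs.v *)
(* Encoding: for objects a b,
   [Hom a b] are the 1-cells a -> b and [Cell a b] are all 2-cells between
   1-cells a -> b, each with a source [src] and target [tgt] 1-cell.
   [vcomp be al] is the vertical composite be . al (al first); it is only
   meaningful when [src be = tgt al] (its value otherwise is junk and no axiom
   mentions it).  [hcomp be al] is the horizontal composite be * al, with
   [src (be * al) = src be  src al] (juxtaposition = [comp]). *)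
Record TwoCat : Type := {
  Ob : Type;
  Hom : Ob -> Ob -> Type;
  Cell : Ob -> Ob -> Type;
  src : forall a b, Cell a b -> Hom a b;
  tgt : forall a b, Cell a b -> Hom a b;
  id1 : forall a, Hom a a;
  comp : forall a b c, Hom b c -> Hom a b -> Hom a c;
  id2 : forall a b, Hom a b -> Cell a b;
  vcomp : forall a b, Cell a b -> Cell a b -> Cell a b;
  hcomp : forall a b c, Cell b c -> Cell a b -> Cell a c;
  comp_assoc : forall a b c d (h : Hom c d) (g : Hom b c) (f : Hom a b),
    comp _ _ _ h (comp _ _ _ g f) = comp _ _ _ (comp _ _ _ h g) f;
  comp_id_l : forall a b (f : Hom a b), comp _ _ _ (id1 b) f = f;
  comp_id_r : forall a b (f : Hom a b), comp _ _ _ f (id1 a) = f;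
  src_id2 : forall a b (f : Hom a b), src _ _ (id2 _ _ f) = f;
  tgt_id2 : forall a b (f : Hom a b), tgt _ _ (id2 _ _ f) = f;
  src_vcomp : forall a b (be al : Cell a b), src _ _ be = tgt _ _ al ->
    src _ _ (vcomp _ _ be al) = src _ _ al;
  tgt_vcomp : forall a b (be al : Cell a b), src _ _ be = tgt _ _ al ->
    tgt _ _ (vcomp _ _ be al) = tgt _ _ be;
  vcomp_assoc : forall a b (ga be al : Cell a b),
    src _ _ ga = tgt _ _ be -> src _ _ be = tgt _ _ al ->
    vcomp _ _ ga (vcomp _ _ be al) = vcomp _ _ (vcomp _ _ ga be) al;
  vcomp_id_l : forall a b (al : Cell a b), vcomp _ _ (id2 _ _ (tgt _ _ al)) al = al;
  vcomp_id_r : forall a b (al : Cell a b), vcomp _ _ al (id2 _ _ (src _ _ al)) = al;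
  src_hcomp : forall a b c (be : Cell b c) (al : Cell a b),
    src _ _ (hcomp _ _ _ be al) = comp _ _ _ (src _ _ be) (src _ _ al);
  tgt_hcomp : forall a b c (be : Cell b c) (al : Cell a b),
    tgt _ _ (hcomp _ _ _ be al) = comp _ _ _ (tgt _ _ be) (tgt _ _ al);
  hcomp_assoc : forall a b c d (ga : Cell c d) (be : Cell b c) (al : Cell a b),
    hcomp _ _ _ ga (hcomp _ _ _ be al) = hcomp _ _ _ (hcomp _ _ _ ga be) al;
  hcomp_id_l : forall a b (al : Cell a b), hcomp _ _ _ (id2 _ _ (id1 b)) al = al;
  hcomp_id_r : forall a b (al : Cell a b), hcomp _ _ _ al (id2 _ _ (id1 a)) = al;
  hcomp_id2 : forall a b c (g : Hom b c) (f : Hom a b),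
    hcomp _ _ _ (id2 _ _ g) (id2 _ _ f) = id2 _ _ (comp _ _ _ g f);
  interchange : forall a b c (de ga : Cell b c) (be al : Cell a b),
    src _ _ de = tgt _ _ ga -> src _ _ be = tgt _ _ al ->
    hcomp _ _ _ (vcomp _ _ de ga) (vcomp _ _ be al)
    = vcomp _ _ (hcomp _ _ _ de be) (hcomp _ _ _ ga al)
}.

Arguments Hom {t} _ _.
Arguments Cell {t} _ _.
Arguments src {t a b} _.
Arguments tgt {t a b} _.
Arguments id1 {t} _.
Arguments comp {t a b c} _ _.
Arguments id2 {t a b} _.
Arguments vcomp {t a b} _ _.
Arguments hcomp {t a b c} _ _.

Section Co.
Variable A : TwoCat.

Lemma co_src_vcomp a b (be al : Cell (t:=A) a b) : tgt be = src al ->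
  tgt (vcomp al be) = tgt al.
Proof. intro H. apply tgt_vcomp. symmetry; exact H. Qed.
Lemma co_tgt_vcomp a b (be al : Cell (t:=A) a b) : tgt be = src al ->
  src (vcomp al be) = src be.
Proof. intro H. apply src_vcomp. symmetry; exact H. Qed.
Lemma co_vcomp_assoc a b (ga be al : Cell (t:=A) a b) :
  tgt ga = src be -> tgt be = src al ->
  vcomp (vcomp al be) ga = vcomp al (vcomp be ga).
Proof. intros H1 H2. symmetry. apply vcomp_assoc; symmetry; assumption. Qed.
Lemma co_interchange a b c (de ga : Cell (t:=A) b c) (be al : Cell a b) :
  tgt de = src ga -> tgt be = src al ->
  hcomp (vcomp ga de) (vcomp al be) = vcomp (hcomp ga al) (hcomp de be).
Proof. intros H1 H2. apply interchange; symmetry; assumption. Qed.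

Definition co : TwoCat := {|
  Ob := Ob A; Hom := @Hom A; Cell := @Cell A;
  src := fun a b x => @tgt A a b x;
  tgt := fun a b x => @src A a b x;
  id1 := @id1 A; comp := @comp A; id2 := @id2 A;
  vcomp := fun a b be al => @vcomp A a b al be;
  hcomp := @hcomp A;
  comp_assoc := comp_assoc A; comp_id_l := comp_id_l A; comp_id_r := comp_id_r A;
  src_id2 := tgt_id2 A; tgt_id2 := src_id2 A;
  src_vcomp := co_src_vcomp; tgt_vcomp := co_tgt_vcomp;
  vcomp_assoc := co_vcomp_assoc;
  vcomp_id_l := fun a b al => vcomp_id_r A a b al;
  vcomp_id_r := fun a b al => vcomp_id_l A a b al;
  src_hcomp := tgt_hcomp A; tgt_hcomp := src_hcomp A;
  hcomp_assoc := hcomp_assoc A; hcomp_id_l := hcomp_id_l A;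
  hcomp_id_r := hcomp_id_r A; hcomp_id2 := hcomp_id2 A;
  interchange := co_interchange |}.
End Co.

Section Notions.
Context {A : TwoCat}.

Definition cell_in {a b : Ob A} (th : Cell a b) (f g : Hom a b) : Prop :=
  src th = f /\ tgt th = g.

Definition invertible {a b : Ob A} (th : Cell a b) (f g : Hom a b) : Prop :=
  cell_in th f g /\
  exists th' : Cell a b, cell_in th' g f /\ vcomp th' th = id2 f /\ vcomp th th' = id2 g.

Definition is_equivalence {a b : Ob A} (f : Hom a b) : Prop :=
  exists (g : Hom b a) (th1 : Cell a a) (th2 : Cell b b),
    invertible th1 (comp g f) (id1 a) /\ invertible th2 (comp f g) (id1 b).

Definition is_adjunction {a b : Ob A} (l : Hom b a) (r : Hom a b)
  (et : Cell b b) (ep : Cell a a) : Prop :=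
  cell_in et (id1 b) (comp r l) /\ cell_in ep (comp l r) (id1 a) /\
  vcomp (hcomp ep (id2 l)) (hcomp (id2 l) et) = id2 l /\
  vcomp (hcomp (id2 r) ep) (hcomp et (id2 r)) = id2 r.

Definition has_left_adjoint {e b : Ob A} (p : Hom e b) : Prop :=
  exists (l : Hom b e) (et : Cell b b) (ep : Cell e e), is_adjunction l p et ep.

Definition has_right_adjoint {e b : Ob A} (p : Hom e b) : Prop :=
  exists (r : Hom b e) (et : Cell e e) (ep : Cell b b), is_adjunction p r et ep.

(* Opcomma object (P, d0, d1, al) of p along itself; "isomorphism of categories"
   = bijective on objects and on morphisms. *)
Definition is_opcomma {e b P : Ob A} (p : Hom e b) (d0 d1 : Hom b P)
  (al : Cell e P) : Prop :=
  cell_in al (comp d1 p) (comp d0 p) /\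
  forall y : Ob A,
    (forall (h0 h1 : Hom b y) (be : Cell e y), cell_in be (comp h1 p) (comp h0 p) ->
       exists! h : Hom P y, comp h d0 = h0 /\ comp h d1 = h1 /\ hcomp (id2 h) al = be) /\
    (forall (h h' : Hom P y) (x0 x1 : Cell b y),
       cell_in x0 (comp h d0) (comp h' d0) -> cell_in x1 (comp h d1) (comp h' d1) ->
       vcomp (hcomp x0 (id2 p)) (hcomp (id2 h) al)
         = vcomp (hcomp (id2 h') al) (hcomp x1 (id2 p)) ->
       exists! x : Cell P y, cell_in x h h' /\ hcomp x (id2 d0) = x0 /\ hcomp x (id2 d1) = x1).

Definition is_2pushout {c c0 c1 Q : Ob A} (f0 : Hom c c0) (f1 : Hom c c1)
  (q0 : Hom c0 Q) (q1 : Hom c1 Q) : Prop :=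
  comp q0 f0 = comp q1 f1 /\
  forall y : Ob A,
    (forall (k0 : Hom c0 y) (k1 : Hom c1 y), comp k0 f0 = comp k1 f1 ->
       exists! k : Hom Q y, comp k q0 = k0 /\ comp k q1 = k1) /\
    (forall (k k' : Hom Q y) (x0 : Cell c0 y) (x1 : Cell c1 y),
       cell_in x0 (comp k q0) (comp k' q0) -> cell_in x1 (comp k q1) (comp k' q1) ->
       hcomp x0 (id2 f0) = hcomp x1 (id2 f1) ->
       exists! x : Cell Q y, cell_in x k k' /\ hcomp x (id2 q0) = x0 /\ hcomp x (id2 q1) = x1).

Record CokData {e b : Ob A} (p : Hom e b) : Type := {
  ck_P : Ob A;
  ck_d0 : Hom b ck_P;
  ck_d1 : Hom b ck_P;
  ck_al : Cell e ck_P;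
  ck_Q : Ob A;
  ck_D0 : Hom ck_P ck_Q;
  ck_D1 : Hom ck_P ck_Q;
  ck_D2 : Hom ck_P ck_Q;
  ck_s0 : Hom ck_P b
}.
Arguments ck_P {e b p}. Arguments ck_d0 {e b p}. Arguments ck_d1 {e b p}.
Arguments ck_al {e b p}. Arguments ck_Q {e b p}. Arguments ck_D0 {e b p}.
Arguments ck_D1 {e b p}. Arguments ck_D2 {e b p}. Arguments ck_s0 {e b p}.

Definition is_cokernel_diagram {e b : Ob A} (p : Hom e b) (K : CokData p) : Prop :=
  is_opcomma p (ck_d0 K) (ck_d1 K) (ck_al K) /\
  is_2pushout (ck_d0 K) (ck_d1 K) (ck_D2 K) (ck_D0 K) /\
  (comp (ck_D1 K) (ck_d1 K) = comp (ck_D2 K) (ck_d1 K) /\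
   comp (ck_D1 K) (ck_d0 K) = comp (ck_D0 K) (ck_d0 K) /\
   hcomp (id2 (ck_D1 K)) (ck_al K)
     = vcomp (hcomp (id2 (ck_D0 K)) (ck_al K)) (hcomp (id2 (ck_D2 K)) (ck_al K))) /\
  (comp (ck_s0 K) (ck_d0 K) = id1 b /\ comp (ck_s0 K) (ck_d1 K) = id1 b /\
   hcomp (id2 (ck_s0 K)) (ck_al K) = id2 p).

Definition has_cokernel_diagram {e b : Ob A} (p : Hom e b) : Prop :=
  exists K : CokData p, is_cokernel_diagram p K.

Definition is_desc {e b : Ob A} {p : Hom e b} (K : CokData p) {y : Ob A}
  (h : Hom y b) (be : Cell y (ck_P K)) : Prop :=
  cell_in be (comp (ck_d1 K) h) (comp (ck_d0 K) h) /\
  vcomp (hcomp (id2 (ck_D0 K)) be) (hcomp (id2 (ck_D2 K)) be) = hcomp (id2 (ck_D1 K)) be /\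
  hcomp (id2 (ck_s0 K)) be = id2 h.

Definition is_desc_mor {e b : Ob A} {p : Hom e b} (K : CokData p) {y : Ob A}
  (h1 : Hom y b) (be1 : Cell y (ck_P K)) (h0 : Hom y b) (be0 : Cell y (ck_P K))
  (x : Cell y b) : Prop :=
  cell_in x h1 h0 /\
  vcomp be0 (hcomp (id2 (ck_d1 K)) x) = vcomp (hcomp (id2 (ck_d0 K)) x) be1.

Definition is_lax_descent {e b : Ob A} {p : Hom e b} (K : CokData p) {L : Ob A}
  (d : Hom L b) (Ps : Cell L (ck_P K)) : Prop :=
  cell_in Ps (comp (ck_d1 K) d) (comp (ck_d0 K) d) /\
  forall y : Ob A,
    (forall g : Hom y L, is_desc K (comp d g) (hcomp Ps (id2 g))) /\
    (forall (g g' : Hom y L) (x : Cell y L), cell_in x g g' ->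
       is_desc_mor K (comp d g) (hcomp Ps (id2 g)) (comp d g') (hcomp Ps (id2 g'))
         (hcomp (id2 d) x)) /\
    (forall (h : Hom y b) (be : Cell y (ck_P K)), is_desc K h be ->
       exists! g : Hom y L, comp d g = h /\ hcomp Ps (id2 g) = be) /\
    (forall (g g' : Hom y L) (x : Cell y b),
       is_desc_mor K (comp d g) (hcomp Ps (id2 g)) (comp d g') (hcomp Ps (id2 g')) x ->
       exists! xi : Cell y L, cell_in xi g g' /\ hcomp (id2 d) xi = x).

Definition effective_faithful {e b : Ob A} (p : Hom e b) : Prop :=
  exists K : CokData p, is_cokernel_diagram p K /\
  exists (L : Ob A) (d : Hom L b) (Ps : Cell L (ck_P K)),
    is_lax_descent K d Ps /\
    exists pH : Hom e L,
      comp d pH = p /\ hcomp Ps (id2 pH) = ck_al K /\ is_equivalence pH.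

Definition is_right_kan {a c d : Ob A} (f : Hom a d) (g : Hom a c)
  (r : Hom c d) (ga : Cell a d) : Prop :=
  cell_in ga (comp r g) f /\
  forall (k : Hom c d) (th : Cell a d), cell_in th (comp k g) f ->
    exists! be : Cell c d, cell_in be k r /\ vcomp ga (hcomp be (id2 g)) = th.

Definition is_codensity_monad {e b : Ob A} (p : Hom e b) (t : Hom b b)
  (ga : Cell e b) (m : Cell b b) (et : Cell b b) : Prop :=
  is_right_kan p p t ga /\
  cell_in m (comp t t) t /\
  vcomp ga (hcomp m (id2 p)) = vcomp ga (hcomp (id2 t) ga) /\
  cell_in et (id1 b) t /\
  vcomp ga (hcomp et (id2 p)) = id2 p.

Definition is_alg {b : Ob A} (t : Hom b b) (m et : Cell b b) {y : Ob A}
  (h : Hom y b) (be : Cell y b) : Prop :=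
  cell_in be (comp t h) h /\
  vcomp be (hcomp (id2 t) be) = vcomp be (hcomp m (id2 h)) /\
  vcomp be (hcomp et (id2 h)) = id2 h.

Definition is_alg_mor {b : Ob A} (t : Hom b b) {y : Ob A}
  (h1 : Hom y b) (be1 : Cell y b) (h0 : Hom y b) (be0 : Cell y b) (x : Cell y b) : Prop :=
  cell_in x h1 h0 /\ vcomp x be1 = vcomp be0 (hcomp (id2 t) x).

Definition is_EM_object {b : Ob A} (t : Hom b b) (m et : Cell b b) {bT : Ob A}
  (u : Hom bT b) (mu : Cell bT b) : Prop :=
  cell_in mu (comp t u) u /\
  forall y : Ob A,
    (forall g : Hom y bT, is_alg t m et (comp u g) (hcomp mu (id2 g))) /\
    (forall (g g' : Hom y bT) (x : Cell y bT), cell_in x g g' ->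
       is_alg_mor t (comp u g) (hcomp mu (id2 g)) (comp u g') (hcomp mu (id2 g'))
         (hcomp (id2 u) x)) /\
    (forall (h : Hom y b) (be : Cell y b), is_alg t m et h be ->
       exists! g : Hom y bT, comp u g = h /\ hcomp mu (id2 g) = be) /\
    (forall (g g' : Hom y bT) (x : Cell y b),
       is_alg_mor t (comp u g) (hcomp mu (id2 g)) (comp u g') (hcomp mu (id2 g')) x ->
       exists! xi : Cell y bT, cell_in xi g g' /\ hcomp (id2 u) xi = x).

Definition monadic {e b : Ob A} (p : Hom e b) : Prop :=
  exists (t : Hom b b) (ga : Cell e b) (m et : Cell b b),
    is_codensity_monad p t ga m et /\
    exists (bT : Ob A) (u : Hom bT b) (mu : Cell bT b),
      is_EM_object t m et u mu /\
      exists pT : Hom e bT,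
        comp u pT = p /\ hcomp mu (id2 pT) = ga /\ is_equivalence pT.

End Notions.

Definition comonadic {A : TwoCat} {e b : Ob A} (p : Hom e b) : Prop :=
  @monadic (co A) e b p.

(* Main.v *)
Require Import Defs.
From Stdlib Require Import Setoid.

Section Infra.
Context {A : TwoCat}.

Lemma ci_id {a b} (f : Hom (t:=A) a b) : cell_in (id2 f) f f.
Proof. split; [apply src_id2|apply tgt_id2]. Qed.

Lemma ci_v {a b} (be al : Cell (t:=A) a b) f g g' h :
  cell_in be g' h -> cell_in al f g -> g = g' -> cell_in (vcomp be al) f h.
Proof.
  intros [H1 H2] [H3 H4] E; subst. split.
  - rewrite src_vcomp; auto.
  - rewrite tgt_vcomp; auto.
Qed.

Lemma ci_h {a b c} (be : Cell (t:=A) b c) (al : Cell a b) g g' f f' :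
  cell_in be g g' -> cell_in al f f' -> cell_in (hcomp be al) (comp g f) (comp g' f').
Proof.
  intros [H1 H2] [H3 H4]; split.
  - rewrite src_hcomp; congruence.
  - rewrite tgt_hcomp; congruence.
Qed.

Lemma ci_conv {a b} (al : Cell (t:=A) a b) f g f' g' :
  cell_in al f g -> f = f' -> g = g' -> cell_in al f' g'.
Proof. intros H E1 E2; subst; exact H. Qed.

Lemma cmp_of {a b} (x y : Cell (t:=A) a b) f g g' h :
  cell_in x g' h -> cell_in y f g -> g = g' -> src x = tgt y.
Proof. intros [H1 H2] [H3 H4] E; congruence. Qed.

Lemma src_of {a b} (x : Cell (t:=A) a b) f g f' :
  cell_in x f g -> f = f' -> src x = f'.
Proof. intros [H1 H2] E; congruence. Qed.

Lemma tgt_of {a b} (x : Cell (t:=A) a b) f g g' :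
  cell_in x f g -> g = g' -> tgt x = g'.
Proof. intros [H1 H2] E; congruence. Qed.

Lemma ext_eq {a b c d} (x : Hom (t:=A) c d) (y : Hom b c) (z : Hom b d) :
  comp x y = z -> forall w : Hom a b, comp x (comp y w) = comp z w.
Proof. intros H w. rewrite comp_assoc, H. reflexivity. Qed.

End Infra.

Ltac hnorm :=
  repeat rewrite <- comp_assoc; repeat rewrite comp_id_l; repeat rewrite comp_id_r.

Ltac hstep :=
  match goal with
  | H : @comp _ _ _ _ ?x ?y = _ |- _ =>
      first [ rewrite H | rewrite (ext_eq _ _ _ H) ]
  end.

Ltac homeq := hnorm; repeat (hstep; hnorm); reflexivity.

Ltac ci0 :=
  lazymatch goal with
  | |- cell_in (vcomp _ _) _ _ => eapply ci_v; [ci0 | ci0 | homeq]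
  | |- cell_in (hcomp _ _) _ _ => eapply ci_h; [ci0 | ci0]
  | |- cell_in (id2 _) _ _ => apply ci_id
  | |- _ => eassumption
  end.

Ltac ci := eapply ci_conv; [ci0 | homeq | homeq].

Ltac sc :=
  lazymatch goal with
  | |- cell_in _ _ _ => ci
  | |- src _ = tgt _ => eapply cmp_of; [ci0 | ci0 | homeq]
  | |- src _ = _ => eapply src_of; [ci0 | homeq]
  | |- tgt _ = _ => eapply tgt_of; [ci0 | homeq]
  | |- _ = src _ => symmetry; eapply src_of; [ci0 | homeq]
  | |- _ = tgt _ => symmetry; eapply tgt_of; [ci0 | homeq]
  end.

Section Gen.
Context {A : TwoCat}.

Lemma vid_l' {a b} (x : Cell (t:=A) a b) f : tgt x = f -> vcomp (id2 f) x = x.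
Proof. intros <-; apply vcomp_id_l. Qed.
Lemma vid_r' {a b} (x : Cell (t:=A) a b) f : src x = f -> vcomp x (id2 f) = x.
Proof. intros <-; apply vcomp_id_r. Qed.

Lemma vA {a b} (z y x : Cell (t:=A) a b) : src z = tgt y -> src y = tgt x ->
  vcomp z (vcomp y x) = vcomp (vcomp z y) x.
Proof. apply vcomp_assoc. Qed.

Lemma hc_split1 {a b c} (y : Cell (t:=A) b c) (x : Cell a b) :
  hcomp y x = vcomp (hcomp y (id2 (tgt x))) (hcomp (id2 (src y)) x).
Proof.
  rewrite <- interchange.
  - rewrite vcomp_id_r, vcomp_id_l. reflexivity.
  - rewrite ?src_id2, ?tgt_id2; reflexivity.
  - rewrite ?src_id2, ?tgt_id2; reflexivity.
Qed.

Lemma hc_split2 {a b c} (y : Cell (t:=A) b c) (x : Cell a b) :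
  hcomp y x = vcomp (hcomp (id2 (tgt y)) x) (hcomp y (id2 (src x))).
Proof.
  rewrite <- interchange.
  - rewrite vcomp_id_r, vcomp_id_l. reflexivity.
  - rewrite ?src_id2, ?tgt_id2; reflexivity.
  - rewrite ?src_id2, ?tgt_id2; reflexivity.
Qed.

Lemma xchg {a b c} (y : Cell (t:=A) b c) (x : Cell a b) f f' g g' :
  cell_in y f f' -> cell_in x g g' ->
  vcomp (hcomp y (id2 g')) (hcomp (id2 f) x) = vcomp (hcomp (id2 f') x) (hcomp y (id2 g)).
Proof.
  intros [H1 H2] [H3 H4]. rewrite <- H1, <- H2, <- H3, <- H4.
  rewrite <- hc_split1, <- hc_split2. reflexivity.
Qed.

Lemma wl_v {a b c} (f : Hom (t:=A) b c) (y x : Cell a b) : src y = tgt x ->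
  hcomp (id2 f) (vcomp y x) = vcomp (hcomp (id2 f) y) (hcomp (id2 f) x).
Proof.
  intros H. rewrite <- interchange; auto.
  - rewrite vid_l'; auto. apply tgt_id2.
  - rewrite src_id2, tgt_id2; auto.
Qed.

Lemma wr_v {a b c} (f : Hom (t:=A) a b) (y x : Cell b c) : src y = tgt x ->
  hcomp (vcomp y x) (id2 f) = vcomp (hcomp y (id2 f)) (hcomp x (id2 f)).
Proof.
  intros H. rewrite <- interchange; auto.
  - rewrite vid_l'; auto. apply tgt_id2.
  - rewrite src_id2, tgt_id2; auto.
Qed.

Lemma wl_comp {a b c d} (g : Hom (t:=A) c d) (f : Hom b c) (x : Cell a b) :
  hcomp (id2 g) (hcomp (id2 f) x) = hcomp (id2 (comp g f)) x.
Proof. rewrite hcomp_assoc, hcomp_id2; reflexivity. Qed.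

Lemma wr_comp {a b c d} (x : Cell (t:=A) c d) (g : Hom b c) (f : Hom a b) :
  hcomp (hcomp x (id2 g)) (id2 f) = hcomp x (id2 (comp g f)).
Proof. rewrite <- hcomp_assoc, hcomp_id2; reflexivity. Qed.

Lemma wl_id {a b c} (f : Hom (t:=A) b c) (g : Hom a b) :
  hcomp (id2 f) (id2 g) = id2 (comp f g).
Proof. apply hcomp_id2. Qed.

Lemma id2_eq {a b} (f g : Hom (t:=A) a b) : f = g -> id2 f = id2 g.
Proof. intros ->; reflexivity. Qed.

Lemma hA {a b c d} (z : Cell (t:=A) c d) (y : Cell b c) (x : Cell a b) :
  hcomp z (hcomp y x) = hcomp (hcomp z y) x.
Proof. apply hcomp_assoc. Qed.
Lemma hid_l {a b} (x : Cell (t:=A) a b) : hcomp (id2 (id1 b)) x = x.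
Proof. apply hcomp_id_l. Qed.
Lemma hid_r {a b} (x : Cell (t:=A) a b) : hcomp x (id2 (id1 a)) = x.
Proof. apply hcomp_id_r. Qed.

Lemma lemG {P b y} (k : Hom (t:=A) b P) (R : Hom P b) (X : Cell P P)
  (Z : Hom y P) (h : Hom y b) (z : Cell y P) :
  cell_in X (id1 P) (comp k R) -> hcomp X (id2 k) = id2 k ->
  cell_in z Z (comp k h) ->
  z = vcomp (hcomp (id2 k) (hcomp (id2 R) z)) (hcomp X (id2 Z)).
Proof.
  intros HX HXk Hz.
  rewrite wl_comp.
  destruct HX as [HX1 HX2]. destruct Hz as [Hz1 Hz2].
  rewrite <- HX2, <- Hz1, <- hc_split2, hc_split1.
  rewrite HX1, Hz2, hcomp_id_l, <- hcomp_id2, hcomp_assoc, HXk, hcomp_id2.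
  rewrite vid_l'; auto.
Qed.

Lemma lemG_inj {P b y} (k : Hom (t:=A) b P) (R : Hom P b) (X : Cell P P)
  (Z : Hom y P) (h : Hom y b) (z z' : Cell y P) :
  cell_in X (id1 P) (comp k R) -> hcomp X (id2 k) = id2 k ->
  cell_in z Z (comp k h) -> cell_in z' Z (comp k h) ->
  hcomp (id2 R) z = hcomp (id2 R) z' -> z = z'.
Proof.
  intros HX HXk Hz Hz' E.
  rewrite (lemG k R X Z h z), (lemG k R X Z h z'), E; auto.
Qed.

End Gen.

Section Gen2.
Context {A : TwoCat}.
Lemma nat_l {a b} (y : Cell (t:=A) b b) (F : Hom b b) (x : Cell a b) G H :
  cell_in y (id1 b) F -> cell_in x G H ->
  vcomp (hcomp (id2 F) x) (hcomp y (id2 G)) = vcomp (hcomp y (id2 H)) x.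
Proof.
  intros Hy Hx. rewrite <- (xchg y x (id1 b) F G H) by auto. rewrite hid_l. reflexivity.
Qed.
Lemma nat_r {a b} (y : Cell (t:=A) b b) (F : Hom b b) (x : Cell a b) G H :
  cell_in y F (id1 b) -> cell_in x G H ->
  vcomp (hcomp y (id2 H)) (hcomp (id2 F) x) = vcomp x (hcomp y (id2 G)).
Proof.
  intros Hy Hx. rewrite (xchg y x F (id1 b) G H) by auto. rewrite hid_l. reflexivity.
Qed.
End Gen2.

Section Gen3.
Context {A : TwoCat}.
Lemma nat_ll {b} (y : Cell (t:=A) b b) (F : Hom b b) (x : Cell b b) H :
  cell_in y (id1 b) F -> cell_in x (id1 b) H ->
  vcomp (hcomp (id2 F) x) y = vcomp (hcomp y (id2 H)) x.
Proof.
  intros Hy Hx. rewrite <- (nat_l y F x (id1 b) H) by auto. rewrite hid_r. reflexivity.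
Qed.
End Gen3.

Section KanU.
Context {A : TwoCat}.
Lemma kan_uniq {a c d} (f : Hom (t:=A) a d) (g : Hom a c) (r : Hom c d) (ga : Cell a d)
  (k : Hom c d) (b1 b2 : Cell c d) :
  is_right_kan f g r ga -> cell_in b1 k r -> cell_in b2 k r ->
  vcomp ga (hcomp b1 (id2 g)) = vcomp ga (hcomp b2 (id2 g)) -> b1 = b2.
Proof.
  intros [Hga HK] H1 H2 E.
  destruct (HK k (vcomp ga (hcomp b1 (id2 g)))) as [x [_ Hu]]; [ci|].
  rewrite <- (Hu b1), <- (Hu b2); auto.
Qed.
End KanU.

Section Kappa.
Context {A : TwoCat} {e b : Ob A} (p : Hom e b) (K : CokData p).
Notation P := (ck_P p K). Notation d0 := (ck_d0 p K). Notation d1 := (ck_d1 p K).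
Notation al := (ck_al p K). Notation Q := (ck_Q p K). Notation D0 := (ck_D0 p K).
Notation D1 := (ck_D1 p K). Notation D2 := (ck_D2 p K). Notation s0 := (ck_s0 p K).
Hypothesis Hal : cell_in al (comp d1 p) (comp d0 p).
Hypothesis HD20 : comp D2 d0 = comp D0 d1.
Hypothesis HD11 : comp D1 d1 = comp D2 d1.
Hypothesis HD10 : comp D1 d0 = comp D0 d0.
Hypothesis HD1a : hcomp (id2 D1) al = vcomp (hcomp (id2 D0) al) (hcomp (id2 D2) al).
Hypothesis Hs00 : comp s0 d0 = id1 b.
Hypothesis Hs01 : comp s0 d1 = id1 b.
Hypothesis Hs0a : hcomp (id2 s0) al = id2 p.

Variables (t : Hom b b) (ga : Cell e b) (m et : Cell b b).
Hypothesis Hcod : is_codensity_monad p t ga m et.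
Variables (l : Hom b e) (eta : Cell b b) (eps : Cell e e).
Hypothesis Hadj : is_adjunction l p eta eps.
Variable phi : Cell b b.
Hypothesis Hphi : cell_in phi (comp p l) t.
Hypothesis Hphi2 : vcomp ga (hcomp phi (id2 p)) = hcomp (id2 p) eps.

Variable r : Hom P b.
Hypotheses (Hr0 : comp r d0 = id1 b) (Hr1 : comp r d1 = t) (Hra : hcomp (id2 r) al = ga).
Variable R : Hom Q b.
Hypotheses (HR0 : comp R D0 = r) (HR2 : comp R D2 = comp t r).

Definition ka := vcomp (hcomp (id2 d0) phi) (vcomp (hcomp al (id2 l)) (hcomp (id2 d1) eta)).

Lemma Hga : cell_in ga (comp t p) p.
Proof. destruct Hcod as [[H _] _]. exact H. Qed.
Lemma Heta : cell_in eta (id1 b) (comp p l).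
Proof. destruct Hadj as [H _]. exact H. Qed.
Lemma Heps : cell_in eps (comp l p) (id1 e).
Proof. destruct Hadj as [_ [H _]]. exact H. Qed.
Lemma Htri : vcomp (hcomp (id2 p) eps) (hcomp eta (id2 p)) = id2 p.
Proof. destruct Hadj as [_ [_ [_ H]]]. exact H. Qed.

Lemma Hka : cell_in ka d1 (comp d0 t).
Proof. pose proof Hga; pose proof Heta; pose proof Heps. unfold ka. ci. Qed.

Lemma K1 : vcomp (hcomp (id2 d0) ga) (hcomp ka (id2 p)) = al.
Proof.
  pose proof Hga; pose proof Heta; pose proof Heps.
  unfold ka. rewrite !wr_v by sc.
  rewrite <- !hA, !hcomp_id2.
  rewrite (vA (hcomp (id2 d0) ga)) by sc.
  rewrite <- wl_v by sc. rewrite Hphi2, wl_comp.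
  rewrite (vA (hcomp (id2 (comp d0 p)) eps)) by sc.
  rewrite <- (xchg al eps (comp d1 p) (comp d0 p) (comp l p) (id1 e)) by sc.
  rewrite hid_r, <- (vA al) by sc.
  rewrite <- wl_comp, <- wl_v by sc. rewrite Htri, hcomp_id2.
  apply vid_r'. sc.
Qed.

Lemma Hkan : is_right_kan p p t ga.
Proof. destruct Hcod as [H _]. exact H. Qed.

Lemma L6 : vcomp (hcomp (id2 p) eps)
   (vcomp (hcomp ga (id2 (comp l p))) (hcomp (id2 t) (hcomp eta (id2 p)))) = ga.
Proof.
  pose proof Hga; pose proof Heta; pose proof Heps.
  rewrite (vA (hcomp (id2 p) eps)) by sc.
  rewrite <- (xchg ga eps (comp t p) p (comp l p) (id1 e)) by sc.
  rewrite hid_r, <- (vA ga) by sc.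
  rewrite <- wl_comp, <- wl_v by sc. rewrite Htri, hcomp_id2.
  apply vid_r'. sc.
Qed.

Lemma rka : hcomp (id2 r) ka = vcomp phi (vcomp (hcomp ga (id2 l)) (hcomp (id2 t) eta)).
Proof.
  pose proof Hga; pose proof Heta; pose proof Heps.
  unfold ka. rewrite !wl_v by sc. rewrite !wl_comp, hA, Hra.
  rewrite (id2_eq _ _ Hr0), (id2_eq _ _ Hr1), hid_l. reflexivity.
Qed.

Lemma K2 : hcomp (id2 r) ka = id2 t.
Proof.
  pose proof Hga; pose proof Heta; pose proof Heps.
  apply (kan_uniq p p t ga t); [apply Hkan| | |].
  - rewrite rka. ci.
  - ci.
  - rewrite rka, !wr_v by sc. rewrite <- !hA, !hcomp_id2.
    rewrite (vA ga) by sc. rewrite Hphi2, L6. rewrite vid_r'; auto. sc.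
Qed.

Lemma K3 : hcomp (id2 s0) ka = et.
Proof.
  pose proof Hga; pose proof Heta; pose proof Heps.
  destruct Hcod as [_ [_ [_ [Het Het2]]]].
  assert (E : hcomp (id2 s0) ka = vcomp phi eta).
  { unfold ka. rewrite !wl_v by sc. rewrite !wl_comp, hA, Hs0a.
    rewrite (id2_eq _ _ Hs00), (id2_eq _ _ Hs01), !hid_l, hcomp_id2.
    rewrite vid_l'; auto. sc. }
  rewrite E. apply (kan_uniq p p t ga (id1 b)); [apply Hkan| ci | ci |].
  rewrite wr_v by sc. rewrite (vA ga) by sc. rewrite Hphi2, Htri, Het2. reflexivity.
Qed.

Lemma RD1a : hcomp (id2 (comp R D1)) al = vcomp ga (hcomp (id2 t) ga).
Proof.
  pose proof Hga.
  rewrite <- wl_comp, HD1a, wl_v by sc. rewrite !wl_comp, HR0, Hra, HR2, <- wl_comp, Hra.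
  reflexivity.
Qed.

Lemma K4 : hcomp (id2 (comp R D1)) ka = m.
Proof.
  pose proof Hga; pose proof Heta; pose proof Heps.
  destruct Hcod as [_ [Hm [Hm2 _]]].
  assert (E : hcomp (id2 (comp R D1)) ka =
    vcomp phi (vcomp (hcomp (vcomp ga (hcomp (id2 t) ga)) (id2 l))
       (hcomp (id2 (comp t t)) eta))).
  { unfold ka. rewrite !wl_v by sc. rewrite !wl_comp, hA, RD1a.
    rewrite (id2_eq (comp (comp R D1) d0) (id1 b)) by homeq.
    rewrite (id2_eq (comp (comp R D1) d1) (comp t t)) by homeq.
    rewrite hid_l. reflexivity. }
  rewrite E. apply (kan_uniq p p t ga (comp t t)); [apply Hkan| ci | ci |].
  rewrite Hm2. rewrite !wr_v by sc. rewrite <- !hA, !hcomp_id2.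
  rewrite (vA ga) by sc. rewrite Hphi2.
  rewrite <- (vA (hcomp ga (id2 (comp l p)))) by sc.
  rewrite (vA (hcomp (id2 p) eps)) by sc.
  rewrite <- (xchg ga eps (comp t p) p (comp l p) (id1 e)) by sc.
  rewrite hid_r, <- (vA ga) by sc. f_equal.
  rewrite <- (wl_comp t p eps), <- (wl_comp t t (hcomp eta (id2 p))).
  rewrite <- !wl_v by sc. rewrite L6. reflexivity.
Qed.

End Kappa.

Section Core.
Context {A : TwoCat} {e b : Ob A} (p : Hom e b) (K : CokData p).
Notation P := (ck_P p K). Notation d0 := (ck_d0 p K). Notation d1 := (ck_d1 p K).
Notation al := (ck_al p K). Notation Q := (ck_Q p K). Notation D0 := (ck_D0 p K).
Notation D1 := (ck_D1 p K). Notation D2 := (ck_D2 p K). Notation s0 := (ck_s0 p K).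
Hypothesis Hal : cell_in al (comp d1 p) (comp d0 p).
Hypothesis HD20 : comp D2 d0 = comp D0 d1.
Hypothesis HD11 : comp D1 d1 = comp D2 d1.
Hypothesis HD10 : comp D1 d0 = comp D0 d0.
Hypothesis HD1a : hcomp (id2 D1) al = vcomp (hcomp (id2 D0) al) (hcomp (id2 D2) al).
Hypothesis Hs00 : comp s0 d0 = id1 b.
Hypothesis Hs01 : comp s0 d1 = id1 b.
Hypothesis Hs0a : hcomp (id2 s0) al = id2 p.

Variables (t : Hom b b) (ga : Cell e b) (m et : Cell b b).
Hypothesis Hga : cell_in ga (comp t p) p.
Hypothesis Hm : cell_in m (comp t t) t.
Hypothesis Het : cell_in et (id1 b) t.

Variable r : Hom P b.
Hypotheses (Hr0 : comp r d0 = id1 b) (Hr1 : comp r d1 = t) (Hra : hcomp (id2 r) al = ga).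
Variable R : Hom Q b.
Hypotheses (HR0 : comp R D0 = r) (HR2 : comp R D2 = comp t r).

Variable ka : Cell b P.
Hypothesis Hka : cell_in ka d1 (comp d0 t).
Hypothesis K2 : hcomp (id2 r) ka = id2 t.
Hypothesis K3 : hcomp (id2 s0) ka = et.
Hypothesis K4 : hcomp (id2 (comp R D1)) ka = m.

Variable X0 : Cell P P.
Hypotheses (HX0 : cell_in X0 (id1 P) (comp d0 r)) (HX0a : hcomp X0 (id2 d0) = id2 d0)
  (HX0b : hcomp X0 (id2 d1) = ka).
Variable X : Cell Q Q.
Hypotheses (HX : cell_in X (id1 Q) (comp (comp D0 d0) R))
  (HXa : hcomp X (id2 (comp D0 d0)) = id2 (comp D0 d0)).

Definition mk {y} (h : Hom y b) (be : Cell y b) :=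
  vcomp (hcomp (id2 d0) be) (hcomp ka (id2 h)).

Lemma C5 {y} (h : Hom y b) z : cell_in z (comp d1 h) (comp d0 h) ->
  z = mk h (hcomp (id2 r) z).
Proof.
  intros Hz. unfold mk. rewrite <- HX0b, wr_comp.
  apply (lemG d0 r X0 (comp d1 h) h z); auto.
Qed.

Lemma mk_ci {y} (h : Hom y b) be : cell_in be (comp t h) h ->
  cell_in (mk h be) (comp d1 h) (comp d0 h).
Proof. intros. unfold mk. ci. Qed.

Lemma r_mk {y} (h : Hom y b) be : cell_in be (comp t h) h ->
  hcomp (id2 r) (mk h be) = be.
Proof.
  intros Hb. unfold mk. rewrite wl_v by sc.
  rewrite wl_comp, hcomp_assoc, K2, hcomp_id2.
  rewrite (id2_eq _ _ Hr0), hcomp_id_l.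
  apply vid_r'. sc.
Qed.

Lemma RD0 {y} (z : Cell y P) : hcomp (id2 R) (hcomp (id2 D0) z) = hcomp (id2 r) z.
Proof. rewrite wl_comp, HR0. reflexivity. Qed.

Lemma RD2 {y} (z : Cell y P) :
  hcomp (id2 R) (hcomp (id2 D2) z) = hcomp (id2 t) (hcomp (id2 r) z).
Proof. rewrite wl_comp, HR2, <- wl_comp. reflexivity. Qed.

Lemma RD1 {y} (h : Hom y b) z : cell_in z (comp d1 h) (comp d0 h) ->
  hcomp (id2 R) (hcomp (id2 D1) z) = vcomp (hcomp (id2 r) z) (hcomp m (id2 h)).
Proof.
  intros Hz. rewrite wl_comp. rewrite (C5 h z) at 1 by auto. unfold mk.
  rewrite wl_v by sc. rewrite wl_comp, (hA (id2 (comp R D1)) ka), K4.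
  rewrite (id2_eq (comp (comp R D1) d0) (id1 b)) by homeq. rewrite hcomp_id_l. reflexivity.
Qed.

Lemma desc_alg {y} (h : Hom y b) z : cell_in z (comp d1 h) (comp d0 h) ->
  (is_desc K h z <-> is_alg t m et h (hcomp (id2 r) z)).
Proof.
  intros Hz.
  assert (Hs : hcomp (id2 s0) z = vcomp (hcomp (id2 r) z) (hcomp et (id2 h))).
  { rewrite (C5 h z) at 1 by auto. unfold mk. rewrite wl_v by sc.
    rewrite wl_comp, (hA (id2 s0) ka), K3, (id2_eq _ _ Hs00), hcomp_id_l. reflexivity. }
  unfold is_desc, is_alg. rewrite Hs. split.
  - intros [_ [H1 H2]]. split; [ci|]. split; [|exact H2].
    apply (f_equal (hcomp (id2 R))) in H1. rewrite wl_v in H1 by sc.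
    rewrite RD0, RD2, (RD1 h z Hz) in H1. exact H1.
  - intros [_ [H1 H2]]. split; [exact Hz|]. split; [|exact H2].
    apply (lemG_inj (comp D0 d0) R X (comp D2 (comp d1 h)) h); auto; try ci.
    rewrite wl_v by sc. rewrite RD0, RD2, (RD1 h z Hz). exact H1.
Qed.

Lemma desc_alg_mor {y} (h1 h0 : Hom y b) z1 z0 x :
  cell_in z1 (comp d1 h1) (comp d0 h1) -> cell_in z0 (comp d1 h0) (comp d0 h0) ->
  (is_desc_mor K h1 z1 h0 z0 x <->
   is_alg_mor t h1 (hcomp (id2 r) z1) h0 (hcomp (id2 r) z0) x).
Proof.
  unfold is_desc_mor, is_alg_mor. intros H1 H0. split; intros [Hx E]; split; auto.
  - apply (f_equal (hcomp (id2 r))) in E. rewrite !wl_v in E by sc. rewrite !wl_comp in E.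
    rewrite (id2_eq _ _ Hr1), (id2_eq _ _ Hr0), hcomp_id_l in E. symmetry; exact E.
  - apply (lemG_inj d0 r X0 (comp d1 h1) h0); auto; try ci.
    rewrite !wl_v by sc. rewrite !wl_comp, (id2_eq _ _ Hr1), (id2_eq _ _ Hr0), hcomp_id_l.
    symmetry; exact E.
Qed.

Lemma alg_desc {y} (h : Hom y b) be : is_alg t m et h be -> is_desc K h (mk h be).
Proof.
  intros Ha. assert (Hb : cell_in be (comp t h) h) by (destruct Ha; auto).
  apply desc_alg. apply mk_ci; auto. rewrite r_mk; auto.
Qed.

Lemma mk_comp {bT y} (u : Hom bT b) (mu : Cell bT b) (g : Hom y bT) :
  cell_in mu (comp t u) u ->
  hcomp (mk u mu) (id2 g) = mk (comp u g) (hcomp mu (id2 g)).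
Proof.
  intros Hmu. unfold mk. rewrite wr_v by sc. rewrite <- !hA, hcomp_id2. reflexivity.
Qed.

Lemma EM_from_lax {L} (d : Hom L b) (Ps : Cell L P) : is_lax_descent K d Ps ->
  is_EM_object t m et d (hcomp (id2 r) Ps).
Proof.
  intros [HPs HL]. split; [ci|]. intros y. destruct (HL y) as [L1 [L2 [L3 L4]]].
  assert (Hz : forall g : Hom y L,
    cell_in (hcomp Ps (id2 g)) (comp d1 (comp d g)) (comp d0 (comp d g))) by (intros; ci).
  assert (Hrz : forall g : Hom y L,
    hcomp (hcomp (id2 r) Ps) (id2 g) = hcomp (id2 r) (hcomp Ps (id2 g)))
    by (intros; symmetry; apply hA).
  split; [|split; [|split]].
  - intros g. rewrite Hrz. apply (desc_alg (comp d g)); auto.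
  - intros g g' x Hx. rewrite !Hrz. apply desc_alg_mor; auto.
  - intros h be Ha. assert (Hb : cell_in be (comp t h) h) by (destruct Ha; auto).
    destruct (L3 h (mk h be)) as [g [[E1 E2] U]].
    + apply alg_desc; auto.
    + exists g. split.
      * split; auto. rewrite Hrz, E2, r_mk; auto.
      * intros g' [E1' E2']. apply U. split; auto.
        transitivity (mk (comp d g') (hcomp (id2 r) (hcomp Ps (id2 g')))).
        -- apply C5; auto.
        -- rewrite <- Hrz, E2', E1'. reflexivity.
  - intros g g' x Hmor. apply L4. rewrite !Hrz in Hmor. apply desc_alg_mor; auto.
Qed.

Lemma lax_from_EM {bT} (u : Hom bT b) (mu : Cell bT b) : is_EM_object t m et u mu ->
  is_lax_descent K u (mk u mu).
Proof.
  intros [Hmu HE].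
  assert (Hmkci : cell_in (mk u mu) (comp d1 u) (comp d0 u)) by (apply mk_ci; auto).
  split; auto. intros y. destruct (HE y) as [E1 [E2 [E3 E4]]].
  assert (Hrm : forall g : Hom y bT,
    hcomp (id2 r) (hcomp (mk u mu) (id2 g)) = hcomp mu (id2 g)).
  { intros g. rewrite mk_comp, r_mk; auto. ci. }
  split; [|split; [|split]].
  - intros g. rewrite mk_comp by auto. apply alg_desc. apply E1.
  - intros g g' x Hx. apply desc_alg_mor; try ci. rewrite !Hrm. apply E2; auto.
  - intros h z Hd. assert (Hz : cell_in z (comp d1 h) (comp d0 h)) by (destruct Hd; auto).
    destruct (E3 h (hcomp (id2 r) z)) as [g [[G1 G2] U]].
    + apply desc_alg; auto.
    + exists g. split.
      * split; auto. rewrite mk_comp, G2, G1 by auto. symmetry. apply C5; auto.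
      * intros g' [G1' G2']. apply U. split; auto. rewrite <- Hrm, G2'. reflexivity.
  - intros g g' x Hd. apply E4. rewrite <- !Hrm. apply desc_alg_mor; try ci. exact Hd.
Qed.

End Core.

Section Exist.
Context {A : TwoCat} {e b : Ob A} (p : Hom e b) (K : CokData p).
Notation P := (ck_P p K). Notation d0 := (ck_d0 p K). Notation d1 := (ck_d1 p K).
Notation al := (ck_al p K). Notation Q := (ck_Q p K). Notation D0 := (ck_D0 p K).
Notation D1 := (ck_D1 p K). Notation D2 := (ck_D2 p K). Notation s0 := (ck_s0 p K).
Hypothesis Hop : is_opcomma p d0 d1 al.
Hypothesis Hpo : is_2pushout d0 d1 D2 D0.

Variables (t : Hom b b) (ga : Cell e b).
Hypothesis Hga : cell_in ga (comp t p) p.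

Lemma ex_r : exists r : Hom P b,
  comp r d0 = id1 b /\ comp r d1 = t /\ hcomp (id2 r) al = ga.
Proof.
  destruct Hop as [Hal Hu]. destruct (Hu b) as [Ho _].
  destruct (Ho (id1 b) t ga) as [r [[H1 [H2 H3]] _]]; [ci|].
  exists r; auto.
Qed.

Variable r : Hom P b.
Hypotheses (Hr0 : comp r d0 = id1 b) (Hr1 : comp r d1 = t) (Hra : hcomp (id2 r) al = ga).
Variable ka : Cell b P.
Hypothesis Hka : cell_in ka d1 (comp d0 t).
Hypothesis K1 : vcomp (hcomp (id2 d0) ga) (hcomp ka (id2 p)) = al.

Lemma ex_X0 : exists X0 : Cell P P,
  cell_in X0 (id1 P) (comp d0 r) /\ hcomp X0 (id2 d0) = id2 d0 /\ hcomp X0 (id2 d1) = ka.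
Proof.
  destruct Hop as [Hal Hu]. destruct (Hu P) as [_ Hm].
  destruct (Hm (id1 P) (comp d0 r) (id2 d0) ka) as [X0 [[H1 [H2 H3]] _]]; [ci|ci| |].
  - rewrite hcomp_id2, hid_l, vid_l' by sc.
    rewrite <- wl_comp, Hra, K1. reflexivity.
  - exists X0; auto.
Qed.

Lemma ex_R : exists R : Hom Q b, comp R D2 = comp t r /\ comp R D0 = r.
Proof.
  destruct Hpo as [HD20 Hu]. destruct (Hu b) as [Ho _].
  destruct (Ho (comp t r) r) as [R [[H1 H2] _]]; [homeq|].
  exists R; auto.
Qed.

Variable R : Hom Q b.
Hypotheses (HR0 : comp R D0 = r) (HR2 : comp R D2 = comp t r).
Variable X0 : Cell P P.
Hypotheses (HX0 : cell_in X0 (id1 P) (comp d0 r)) (HX0a : hcomp X0 (id2 d0) = id2 d0)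
  (HX0b : hcomp X0 (id2 d1) = ka).

Lemma ex_X : exists X : Cell Q Q,
  cell_in X (id1 Q) (comp (comp D0 d0) R) /\ hcomp X (id2 (comp D0 d0)) = id2 (comp D0 d0).
Proof.
  destruct Hpo as [HD20 Hu]. destruct (Hu Q) as [_ Hm].
  destruct (Hm (id1 Q) (comp (comp D0 d0) R)
     (vcomp (hcomp (id2 D0) (hcomp ka (id2 r))) (hcomp (id2 D2) X0))
     (hcomp (id2 D0) X0)) as [X [[H1 [H2 H3]] _]]; [ci|ci| |].
  - rewrite wr_v by sc. rewrite <- !hA, HX0a, HX0b, !hcomp_id2.
    rewrite (id2_eq _ _ Hr0), hid_r, vid_r'; auto. sc.
  - exists X. split; auto.
    rewrite <- wr_comp, H3, <- hA, HX0a, hcomp_id2. reflexivity.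
Qed.

End Exist.

Section Monad.
Context {A : TwoCat} {e b : Ob A} (p : Hom e b).
Variables (t : Hom b b) (ga : Cell e b) (m et : Cell b b).
Hypothesis Hcod : is_codensity_monad p t ga m et.

Lemma mon_facts : cell_in ga (comp t p) p /\ cell_in m (comp t t) t /\ cell_in et (id1 b) t /\
  vcomp ga (hcomp m (id2 p)) = vcomp ga (hcomp (id2 t) ga) /\
  vcomp ga (hcomp et (id2 p)) = id2 p.
Proof. destruct Hcod as [[H1 _] [H2 [H3 [H4 H5]]]]. tauto. Qed.

Lemma mon_lunit : vcomp m (hcomp et (id2 t)) = id2 t.
Proof.
  destruct mon_facts as [Hga [Hm [Het [Hm2 Het2]]]].
  apply (kan_uniq p p t ga t); [apply Hcod|ci|ci|].
  rewrite wr_v by sc. rewrite (vA ga) by sc. rewrite Hm2, wr_comp.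
  rewrite <- (vA ga) by sc. rewrite (nat_l et t ga (comp t p) p) by auto.
  rewrite (vA ga) by sc. rewrite Het2, hcomp_id2. rewrite vid_l', vid_r'; auto; sc.
Qed.

Lemma mon_runit : vcomp m (hcomp (id2 t) et) = id2 t.
Proof.
  destruct mon_facts as [Hga [Hm [Het [Hm2 Het2]]]].
  apply (kan_uniq p p t ga t); [apply Hcod|ci|ci|].
  rewrite wr_v by sc. rewrite (vA ga) by sc. rewrite Hm2, <- hA.
  rewrite <- (vA ga) by sc. rewrite <- wl_v by sc. rewrite Het2, !hcomp_id2.
  rewrite vid_r'; auto; sc.
Qed.

Lemma mon_assoc : vcomp m (hcomp (id2 t) m) = vcomp m (hcomp m (id2 t)).
Proof.
  destruct mon_facts as [Hga [Hm [Het [Hm2 Het2]]]].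
  apply (kan_uniq p p t ga (comp t (comp t t))); [apply Hcod|ci|ci|].
  rewrite !wr_v by sc. rewrite !(vA ga) by sc. rewrite !Hm2.
  rewrite <- !(vA ga) by sc.
  rewrite <- (hA (id2 t) m (id2 p)), <- (wl_v t ga) by sc. rewrite Hm2, wl_v by sc.
  rewrite (wr_comp m t p), <- (xchg m ga (comp t t) t (comp t p) p) by auto.
  rewrite (vA ga (hcomp m (id2 p))) by sc. rewrite Hm2, <- (vA ga (hcomp (id2 t) ga)) by sc.
  rewrite wl_comp. reflexivity.
Qed.
End Monad.

Section EMAdj.
Context {A : TwoCat} {e b : Ob A} (p : Hom e b).
Variables (t : Hom b b) (ga : Cell e b) (m et : Cell b b).
Hypothesis Hcod : is_codensity_monad p t ga m et.
Variables (bT : Ob A) (u : Hom bT b) (mu : Cell bT b).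
Hypothesis HEM : is_EM_object t m et u mu.

Lemma EM_alg_id : cell_in mu (comp t u) u /\
  vcomp mu (hcomp (id2 t) mu) = vcomp mu (hcomp m (id2 u)) /\
  vcomp mu (hcomp et (id2 u)) = id2 u.
Proof.
  destruct HEM as [Hmu Hu]. destruct (Hu bT) as [H1 _].
  destruct (H1 (id1 bT)) as [_ [H2 H3]]. rewrite comp_id_r, hid_r in H2, H3. auto.
Qed.

Lemma ex_f : exists f : Hom b bT, comp u f = t /\ hcomp mu (id2 f) = m.
Proof.
  destruct (mon_facts p t ga m et Hcod) as [Hga [Hm [Het _]]].
  destruct HEM as [Hmu Hu]. destruct (Hu b) as [_ [_ [H3 _]]].
  destruct (H3 t m) as [f [[E1 E2] _]].
  - split; [ci|]. split; [apply (mon_assoc p t ga m et Hcod)|apply (mon_lunit p t ga m et Hcod)].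
  - exists f; auto.
Qed.

Variable f : Hom b bT.
Hypotheses (Huf : comp u f = t) (Hmuf : hcomp mu (id2 f) = m).

Lemma ex_epsu : exists epsu : Cell bT bT,
  cell_in epsu (comp f u) (id1 bT) /\ hcomp (id2 u) epsu = mu.
Proof.
  destruct (mon_facts p t ga m et Hcod) as [Hga [Hm [Het _]]].
  destruct EM_alg_id as [Hmu [Ha1 Ha2]].
  destruct HEM as [_ Hu]. destruct (Hu bT) as [_ [_ [_ H4]]].
  destruct (H4 (comp f u) (id1 bT) mu) as [x [[E1 E2] _]].
  - split; [ci|]. rewrite <- wr_comp, Hmuf, hid_r. symmetry; exact Ha1.
  - exists x; auto.
Qed.

Variable epsu : Cell bT bT.
Hypotheses (Hepsu : cell_in epsu (comp f u) (id1 bT)) (Hepsu2 : hcomp (id2 u) epsu = mu).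

Lemma tri_u : vcomp (hcomp (id2 u) epsu) (hcomp et (id2 u)) = id2 u.
Proof. rewrite Hepsu2. apply EM_alg_id. Qed.

Lemma tri_f : vcomp (hcomp epsu (id2 f)) (hcomp (id2 f) et) = id2 f.
Proof.
  destruct (mon_facts p t ga m et Hcod) as [Hga [Hm [Het _]]].
  destruct EM_alg_id as [Hmu [Ha1 Ha2]].
  destruct HEM as [_ Hu]. destruct (Hu b) as [_ [H2 [_ H4]]].
  destruct (H4 f f (hcomp (id2 u) (id2 f))) as [x [_ Hx]].
  - apply H2. apply ci_id.
  - transitivity x; [symmetry|]; apply Hx; split; try ci. 2: reflexivity.
    rewrite wl_v by sc. rewrite wl_comp, hA, Hepsu2, Hmuf, (id2_eq _ _ Huf).
    rewrite (mon_runit p t ga m et Hcod), hcomp_id2, (id2_eq _ _ Huf). reflexivity.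
Qed.

Lemma adj_rep {Y : Hom b bT} (z : Cell b bT) : cell_in z f Y ->
  z = vcomp (hcomp epsu (id2 Y)) (hcomp (id2 f) (vcomp (hcomp (id2 u) z) et)).
Proof.
  intros Hz.
  destruct (mon_facts p t ga m et Hcod) as [Hga [Hm [Het _]]].
  rewrite wl_v by sc. rewrite wl_comp, (vA (hcomp epsu (id2 Y))) by sc.
  rewrite (nat_r epsu (comp f u) z f Y) by auto.
  rewrite <- (vA z) by sc. rewrite tri_f, vid_r'; auto. sc.
Qed.

Lemma adj_inj {Y : Hom b bT} (z1 z2 : Cell b bT) : cell_in z1 f Y -> cell_in z2 f Y ->
  vcomp (hcomp (id2 u) z1) et = vcomp (hcomp (id2 u) z2) et -> z1 = z2.
Proof. intros H1 H2 E. rewrite (adj_rep (Y:=Y) z1), (adj_rep (Y:=Y) z2), E; auto. Qed.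

End EMAdj.

Section LeftAdj.
Context {A : TwoCat} {e b : Ob A} (p : Hom e b).
Variables (t : Hom b b) (ga : Cell e b) (m et : Cell b b).
Hypothesis Hcod : is_codensity_monad p t ga m et.
Variables (bT : Ob A) (u : Hom bT b) (mu : Cell bT b).
Hypothesis HEM : is_EM_object t m et u mu.
Variable f : Hom b bT.
Hypotheses (Huf : comp u f = t) (Hmuf : hcomp mu (id2 f) = m).
Variable epsu : Cell bT bT.
Hypotheses (Hepsu : cell_in epsu (comp f u) (id1 bT)) (Hepsu2 : hcomp (id2 u) epsu = mu).
Variables (pT : Hom e bT) (q : Hom bT e) (th1 th1i : Cell e e) (th2 th2i : Cell bT bT).
Hypothesis Hp : comp u pT = p.
Hypotheses (Hth1 : cell_in th1 (comp q pT) (id1 e)) (Hth1i : cell_in th1i (id1 e) (comp q pT))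
  (Eth1a : vcomp th1i th1 = id2 (comp q pT)) (Eth1b : vcomp th1 th1i = id2 (id1 e)).
Hypotheses (Hth2 : cell_in th2 (comp pT q) (id1 bT)) (Hth2i : cell_in th2i (id1 bT) (comp pT q))
  (Eth2a : vcomp th2i th2 = id2 (comp pT q)) (Eth2b : vcomp th2 th2i = id2 (id1 bT)).

Notation ll := (comp q f).
Definition leta := vcomp (hcomp (id2 u) (hcomp th2i (id2 f))) et.
Definition om' := vcomp (hcomp th2 (id2 pT)) (hcomp (id2 pT) th1i).
Definition ZZ := vcomp om' (hcomp epsu (id2 pT)).
Definition leps := vcomp th1 (hcomp (id2 q) ZZ).

Lemma Het : cell_in et (id1 b) t.
Proof. destruct (mon_facts p t ga m et Hcod) as [_ [_ [H _]]]; exact H. Qed.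
Lemma Hom' : cell_in om' pT pT.
Proof. unfold om'. ci. Qed.
Lemma HZZ : cell_in ZZ (comp (comp f u) pT) pT.
Proof. pose proof Hom'. unfold ZZ. ci. Qed.
Lemma Hleta : cell_in leta (id1 b) (comp p ll).
Proof. pose proof Het. unfold leta. ci. Qed.
Lemma Hleps : cell_in leps (comp ll p) (id1 e).
Proof. pose proof HZZ. unfold leps. ci. Qed.

Lemma om_inv : vcomp (hcomp (id2 pT) th1) (vcomp (hcomp th2i (id2 pT)) om') = id2 pT.
Proof.
  unfold om'. rewrite (vA (hcomp th2i (id2 pT))) by sc.
  rewrite <- wr_v by sc. rewrite Eth2a, hcomp_id2, vid_l' by sc.
  rewrite <- wl_v by sc. rewrite Eth1b, hcomp_id2, comp_id_r. reflexivity.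
Qed.

Lemma ltri2 : vcomp (hcomp (id2 p) leps) (hcomp leta (id2 p)) = id2 p.
Proof.
  pose proof Het; pose proof HZZ; pose proof Hom'.
  rewrite <- Hp.
  assert (E1 : hcomp (id2 (comp u pT)) leps =
     hcomp (id2 u) (vcomp (hcomp (id2 pT) th1) (hcomp (id2 (comp pT q)) ZZ))).
  { unfold leps. rewrite <- wl_comp, (wl_v pT) by sc. rewrite wl_comp. reflexivity. }
  assert (E2 : hcomp leta (id2 (comp u pT)) =
     vcomp (hcomp (id2 u) (hcomp th2i (id2 (comp f (comp u pT))))) (hcomp et (id2 (comp u pT)))).
  { unfold leta. rewrite wr_v by sc. rewrite <- hA, wr_comp. reflexivity. }
  rewrite E1, E2. clear E1 E2.
  rewrite (vA (hcomp (id2 u) _)) by sc. rewrite <- wl_v by sc.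
  rewrite <- (vA (hcomp (id2 pT) th1)) by sc.
  rewrite (nat_l th2i (comp pT q) ZZ (comp f (comp u pT)) pT) by (auto; ci).
  unfold ZZ. rewrite (vA (hcomp th2i (id2 pT))) by sc.
  rewrite (vA (hcomp (id2 pT) th1)) by sc.
  rewrite om_inv.
  rewrite vid_l' by sc.
  rewrite hA, <- wr_comp, <- wr_v by sc.
  rewrite (tri_u t m et bT u mu HEM epsu Hepsu2). apply hcomp_id2.
Qed.

Definition sig_ := vcomp (hcomp leps (id2 ll)) (hcomp (id2 ll) leta).

Lemma ltri1 : sig_ = id2 ll.
Proof.
  pose proof Het; pose proof HZZ; pose proof Hom'; pose proof Hleta; pose proof Hleps.
  assert (Hs : cell_in sig_ ll ll) by (unfold sig_; ci).
  assert (E1 : vcomp (hcomp (id2 p) sig_) leta = leta).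
  { unfold sig_. rewrite wl_v by sc. rewrite wl_comp.
    rewrite <- (vA (hcomp (id2 p) _)) by sc.
    rewrite (nat_ll leta (comp p ll) leta (comp p ll)) by auto.
    rewrite hA, <- (wr_comp leta p ll), (vA (hcomp (hcomp (id2 p) leps) (id2 ll))) by sc.
    rewrite <- wr_v by sc. rewrite ltri2, hcomp_id2, vid_l' by sc. reflexivity. }
  assert (E2 : vcomp (hcomp (id2 pT) sig_) (hcomp th2i (id2 f)) = hcomp th2i (id2 f)).
  { apply (adj_inj p t ga m et Hcod bT u mu HEM f Huf Hmuf epsu Hepsu Hepsu2 (Y := comp pT ll)); try ci.
    rewrite wl_v by sc. rewrite <- (vA (hcomp (id2 u) (hcomp (id2 pT) sig_))) by sc.
    fold leta. rewrite wl_comp, Hp. exact E1. }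
  assert (E3 : hcomp (id2 pT) sig_ = id2 (comp pT ll)).
  { transitivity (vcomp (hcomp (id2 pT) sig_) (hcomp (vcomp th2i th2) (id2 f))).
    - rewrite Eth2a, hcomp_id2. rewrite vid_r'; [reflexivity| sc].
    - rewrite wr_v by sc. rewrite (vA (hcomp (id2 pT) sig_)) by sc. rewrite E2.
      rewrite <- wr_v by sc. rewrite Eth2a, hcomp_id2. apply id2_eq; homeq. }
  rewrite <- (vid_r' sig_ ll) by sc.
  rewrite <- (hid_l (id2 ll)), <- Eth1b, wr_v by sc.
  rewrite (vA sig_) by sc.
  rewrite <- (nat_r th1 (comp q pT) sig_ ll ll) by auto.
  rewrite <- wl_comp, E3, hcomp_id2.
  rewrite vid_r' by sc. rewrite <- wr_v by sc. rewrite Eth1b. reflexivity.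
Qed.

Lemma l_adj : is_adjunction ll p leta leps.
Proof.
  pose proof Hleta; pose proof Hleps.
  split; [auto|]. split; [auto|]. split; [apply ltri1|apply ltri2].
Qed.

End LeftAdj.

Section Back.
Context {A : TwoCat} {e b : Ob A} (p : Hom e b).
Variables (l : Hom b e) (eta : Cell b b) (eps : Cell e e).
Hypothesis Hadj : is_adjunction l p eta eps.

Lemma codensity_of_adj :
  is_codensity_monad p (comp p l) (hcomp (id2 p) eps) (hcomp (hcomp (id2 p) eps) (id2 l)) eta.
Proof.
  destruct Hadj as [Heta [Heps [Htri1 Htri2]]].
  split; [split|].
  - ci.
  - intros k th Hth. exists (vcomp (hcomp th (id2 l)) (hcomp (id2 k) eta)). split.
    + split; [ci|].
      rewrite wr_v by sc. rewrite <- !hA, !hcomp_id2.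
      rewrite (vA (hcomp (id2 p) eps)) by sc.
      rewrite <- (xchg th eps (comp k p) p (comp l p) (id1 e)) by auto.
      rewrite hid_r, <- (vA th) by sc. rewrite <- wl_comp, <- wl_v by sc.
      rewrite Htri2, hcomp_id2, vid_r' by sc. reflexivity.
    + intros be [Hbe E]. subst th.
      rewrite wr_v by sc. rewrite <- (vA (hcomp (hcomp (id2 p) eps) (id2 l))) by sc.
      rewrite wr_comp.
      rewrite (xchg be eta k (comp p l) (id1 b) (comp p l)) by auto.
      rewrite hid_r, (vA (hcomp (hcomp (id2 p) eps) (id2 l))) by sc.
      rewrite <- hA, <- wl_comp, <- wl_v by sc. rewrite Htri1, hcomp_id2.
      rewrite vid_l' by sc. reflexivity.
  - split; [ci|]. split; [|split; [ci|exact Htri2]].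
    rewrite wr_comp, <- hA, <- wl_v by sc.
    rewrite <- (wl_comp p l), (wl_comp l p), <- wl_v by sc.
    f_equal.
    pose proof (xchg eps eps (comp l p) (id1 e) (comp l p) (id1 e) Heps Heps) as X.
    rewrite hid_r, hid_l in X. symmetry. exact X.
Qed.
End Back.

Section Main.
Context {A : TwoCat} {e b : Ob A}.

Lemma fwd (p : Hom e b) : has_cokernel_diagram p -> monadic p ->
  has_left_adjoint p /\ effective_faithful p.
Proof.
  intros [K HK] [t [ga [m [et [Hcod [bT [u [mu [HEM [pT [Hp [Hmu Heqv]]]]]]]]]]]].
  destruct (ex_f p t ga m et Hcod bT u mu HEM) as [f [Huf Hmuf]].
  destruct (ex_epsu p t ga m et Hcod bT u mu HEM f Huf Hmuf) as [epsu [Hepsu Hepsu2]].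
  pose proof Heqv as Heq.
  destruct Heq as [q [th1 [th2 [[Hth1 [th1i [Hth1i [E1a E1b]]]] [Hth2 [th2i [Hth2i [E2a E2b]]]]]]]].
  pose proof (l_adj p t ga m et Hcod bT u mu HEM f Huf Hmuf epsu Hepsu Hepsu2
     pT q th1 th1i th2 th2i Hp Hth1 Hth1i E1b Hth2 Hth2i E2a) as Hadj.
  generalize dependent (leps bT epsu pT q th1 th1i th2).
  generalize dependent (leta et bT u f th2i).
  generalize dependent (comp q f).
  intros l eta eps Hadj.
  split; [exists l, eta, eps; exact Hadj|].
  pose proof HK as HK'.
  destruct HK' as [Hop [Hpo [[HD11 [HD10 HD1a]] [Hs00 [Hs01 Hs0a]]]]].
  pose proof (proj1 Hop) as Hal. pose proof (proj1 Hpo) as HD20.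
  destruct (mon_facts p t ga m et Hcod) as [Hga [Hm [Het _]]].
  pose proof Hadj as [Heta [Heps _]].
  destruct Hcod as [Hkan Hrest]. pose proof Hkan as [_ Hkan2].
  assert (Hcod : is_codensity_monad p t ga m et) by (split; auto).
  destruct (Hkan2 (comp p l) (hcomp (id2 p) eps)) as [phi [[Hphi Hphi2] _]]; [ci|].
  destruct (ex_r p K Hop t ga Hga) as [r [Hr0 [Hr1 Hra]]].
  pose proof (Hka p K Hal t ga m et Hcod l eta eps Hadj phi Hphi) as Hkk.
  pose proof (K1 p K Hal t ga m et Hcod l eta eps Hadj phi Hphi Hphi2) as HK1.
  pose proof (K2 p K Hal t ga m et Hcod l eta eps Hadj phi Hphi Hphi2 r Hr0 Hr1 Hra) as HK2.
  pose proof (K3 p K Hal Hs00 Hs01 Hs0a t ga m et Hcod l eta eps Hadj phi Hphi Hphi2) as HK3.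
  destruct (ex_R p K Hpo t r Hr0 Hr1) as [R [HR2 HR0]].
  pose proof (K4 p K Hal HD20 HD11 HD10 HD1a t ga m et Hcod l eta eps Hadj phi Hphi Hphi2
     r Hr0 Hr1 Hra R HR0 HR2) as HK4.
  generalize dependent (ka p K l eta phi). intros kk Hkk HK1 HK2 HK3 HK4.
  destruct (ex_X0 p K Hop t ga r Hr0 Hr1 Hra kk Hkk HK1) as [X0 [HX0 [HX0a HX0b]]].
  destruct (ex_X p K Hpo t r Hr0 kk Hkk R HR0 HR2 X0 HX0 HX0a HX0b) as [X [HX HXa]].
  exists K. split; [exact HK|].
  exists bT, u, (mk p K kk u mu). split.
  - apply (lax_from_EM p K HD20 HD11 HD10 Hs00 t m et r Hr0 Hr1 R HR0 HR2 kk Hkk HK2 HK3 HK4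
      X0 HX0 HX0a HX0b X HX HXa u mu HEM).
  - exists pT. split; [exact Hp|]. split; [|exact Heqv].
    rewrite (mk_comp p K t kk Hkk u mu pT (proj1 HEM)). unfold mk. rewrite Hmu.
    rewrite (id2_eq _ _ Hp). exact HK1.
Qed.

Lemma bwd (p : Hom e b) : has_left_adjoint p -> effective_faithful p -> monadic p.
Proof.
  intros [l [eta [eps Hadj]]] [K [HK [L [d [Ps [HL [pH [Hd [HPs Heqv]]]]]]]]].
  pose proof (codensity_of_adj p l eta eps Hadj) as Hcod.
  revert Hcod. generalize (hcomp (hcomp (id2 p) eps) (id2 l)). intros m Hcod.
  pose proof Hadj as [Heta [Heps _]].
  assert (Hphi2 : vcomp (hcomp (id2 p) eps) (hcomp (id2 (comp p l)) (id2 p)) = hcomp (id2 p) eps).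
  { rewrite hcomp_id2, vid_r' by sc. reflexivity. }
  assert (Hphi : cell_in (id2 (comp p l)) (comp p l) (comp p l)) by apply ci_id.
  revert Hphi2 Hphi. generalize (id2 (comp p l)). intros phi Hphi2 Hphi.
  set (ga := hcomp (id2 p) eps) in *. set (t := comp p l) in *.
  destruct HK as [Hop [Hpo [[HD11 [HD10 HD1a]] [Hs00 [Hs01 Hs0a]]]]].
  pose proof (proj1 Hop) as Hal. pose proof (proj1 Hpo) as HD20.
  destruct (mon_facts p t ga m eta Hcod) as [Hga [Hm [Het _]]].
  destruct (ex_r p K Hop t ga Hga) as [r [Hr0 [Hr1 Hra]]].
  pose proof (Hka p K Hal t ga m eta Hcod l eta eps Hadj phi Hphi) as Hkk.
  pose proof (K1 p K Hal t ga m eta Hcod l eta eps Hadj phi Hphi Hphi2) as HK1.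
  pose proof (K2 p K Hal t ga m eta Hcod l eta eps Hadj phi Hphi Hphi2 r Hr0 Hr1 Hra) as HK2.
  pose proof (K3 p K Hal Hs00 Hs01 Hs0a t ga m eta Hcod l eta eps Hadj phi Hphi Hphi2) as HK3.
  destruct (ex_R p K Hpo t r Hr0 Hr1) as [R [HR2 HR0]].
  pose proof (K4 p K Hal HD20 HD11 HD10 HD1a t ga m eta Hcod l eta eps Hadj phi Hphi Hphi2
     r Hr0 Hr1 Hra R HR0 HR2) as HK4.
  generalize dependent (ka p K l eta phi). intros kk Hkk HK1 HK2 HK3 HK4.
  destruct (ex_X0 p K Hop t ga r Hr0 Hr1 Hra kk Hkk HK1) as [X0 [HX0 [HX0a HX0b]]].
  destruct (ex_X p K Hpo t r Hr0 kk Hkk R HR0 HR2 X0 HX0 HX0a HX0b) as [X [HX HXa]].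
  exists t, ga, m, eta. split; [exact Hcod|].
  exists L, d, (hcomp (id2 r) Ps). split.
  - apply (EM_from_lax p K HD20 HD11 HD10 Hs00 t m eta r Hr0 Hr1 R HR0 HR2 kk Hkk HK2 HK3 HK4
      X0 HX0 HX0a HX0b X HX HXa d Ps HL).
  - exists pH. split; [exact Hd|]. split; [|exact Heqv].
    rewrite <- hA, HPs, Hra. reflexivity.
Qed.

Lemma monadic_iff (p : Hom e b) : has_cokernel_diagram p ->
  (monadic p <-> has_left_adjoint p /\ effective_faithful p).
Proof.
  intros HK. split.
  - apply fwd; auto.
  - intros [H1 H2]. apply bwd; auto.
Qed.
End Main.

Section Dual.
Context {A : TwoCat}.

Definition toco {e b : Ob A} {p : Hom e b} (K : CokData p) : @CokData (co A) e b p :=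
  @Build_CokData (co A) e b p (ck_P p K) (ck_d1 p K) (ck_d0 p K) (ck_al p K)
     (ck_Q p K) (ck_D2 p K) (ck_D1 p K) (ck_D0 p K) (ck_s0 p K).

Lemma opc_co {e b P : Ob A} (p : Hom e b) (d0 d1 : Hom b P) (al : Cell e P) :
  is_opcomma p d0 d1 al -> @is_opcomma (co A) e b P p d1 d0 al.
Proof.
  unfold is_opcomma, cell_in. cbn. intros [[Ha1 Ha2] Hu]. split; [split; auto|].
  intros y. destruct (Hu y) as [Ho Hm]. split.
  - intros h0 h1 be [B1 B2].
    destruct (Ho h1 h0 be) as [h [[E1 [E2 E3]] U]]; [split; auto|].
    exists h. split; [auto|]. intros h' [F1 [F2 F3]]. apply U; auto.
  - intros h h' x0 x1 [X1 X2] [Y1 Y2] E.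
    destruct (Hm h' h x1 x0) as [x [[[F1 F2] [F3 F4]] U]]; [split; auto|split; auto|auto|].
    exists x. split; [split; [split; auto|auto]|].
    intros x' [[G1 G2] [G3 G4]]. apply U. split; [split; auto|auto].
Qed.

Lemma po_co {c c0 c1 Q : Ob A} (f0 : Hom c c0) (f1 : Hom c c1) (q0 : Hom c0 Q) (q1 : Hom c1 Q) :
  is_2pushout f0 f1 q0 q1 -> @is_2pushout (co A) c c1 c0 Q f1 f0 q1 q0.
Proof.
  unfold is_2pushout, cell_in. cbn. intros [E0 Hu]. split; [auto|].
  intros y. destruct (Hu y) as [Ho Hm]. split.
  - intros k0 k1 E. destruct (Ho k1 k0) as [k [[E1 E2] U]]; [auto|].
    exists k. split; [auto|]. intros k' [F1 F2]. apply U; auto.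
  - intros k k' x0 x1 [X1 X2] [Y1 Y2] E.
    destruct (Hm k' k x1 x0) as [x [[[F1 F2] [F3 F4]] U]]; [split; auto|split; auto|auto|].
    exists x. split; [split; [split; auto|auto]|].
    intros x' [[G1 G2] [G3 G4]]. apply U. split; [split; auto|auto].
Qed.

Lemma cok_co {e b : Ob A} (p : Hom e b) (K : CokData p) :
  is_cokernel_diagram p K -> @is_cokernel_diagram (co A) e b p (toco K).
Proof.
  intros [Hop [Hpo [[H1 [H2 H3]] [H4 [H5 H6]]]]].
  split; [apply (opc_co p _ _ _ Hop)|].
  split; [apply (po_co _ _ _ _ Hpo)|].
  cbn. split; [split; [exact H2|split; [exact H1|exact H3]]|].
  split; [exact H5|split; [exact H4|exact H6]].
Qed.

Lemma desc_co {e b : Ob A} {p : Hom e b} (K : CokData p) {y} (h : Hom y b) be :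
  is_desc K h be -> @is_desc (co A) e b p (toco K) y h be.
Proof. unfold is_desc, cell_in. cbn. intros [[H1 H2] [H3 H4]]. auto. Qed.

Lemma desc_unco {e b : Ob A} {p : Hom e b} (K : CokData p) {y} (h : Hom y b) be :
  @is_desc (co A) e b p (toco K) y h be -> is_desc K h be.
Proof. unfold is_desc, cell_in. cbn. intros [[H1 H2] [H3 H4]]. auto. Qed.

Lemma descmor_co {e b : Ob A} {p : Hom e b} (K : CokData p) {y} (h1 : Hom y b) be1 h0 be0 x :
  is_desc_mor K h0 be0 h1 be1 x -> @is_desc_mor (co A) e b p (toco K) y h1 be1 h0 be0 x.
Proof. unfold is_desc_mor, cell_in. cbn. intros [[H1 H2] H3]. auto. Qed.

Lemma descmor_unco {e b : Ob A} {p : Hom e b} (K : CokData p) {y} (h1 : Hom y b) be1 h0 be0 x :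
  @is_desc_mor (co A) e b p (toco K) y h1 be1 h0 be0 x -> is_desc_mor K h0 be0 h1 be1 x.
Proof. unfold is_desc_mor, cell_in. cbn. intros [[H1 H2] H3]. auto. Qed.

Lemma lax_co {e b : Ob A} {p : Hom e b} (K : CokData p) {L} (d : Hom L b) Ps :
  is_lax_descent K d Ps -> @is_lax_descent (co A) e b p (toco K) L d Ps.
Proof.
  intros [[HP1 HP2] HL]. split; [split; auto|].
  intros y. destruct (HL y) as [L1 [L2 [L3 L4]]]. split; [|split; [|split]].
  - intros g. apply desc_co. apply L1.
  - intros g g' x [X1 X2]. apply descmor_co. apply L2. split; auto.
  - intros h be Hd. apply desc_unco in Hd. destruct (L3 h be Hd) as [g [G U]].
    exists g. split; auto.
  - intros g g' x Hd. apply descmor_unco in Hd. destruct (L4 g' g x Hd) as [xi [[[G1 G2] G3] U]].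
    exists xi. split; [split; [split; auto|auto]|].
    intros xi' [[F1 F2] F3]. apply U. split; [split; auto|auto].
Qed.

Lemma equiv_co {a b : Ob A} (f : Hom a b) : is_equivalence f -> @is_equivalence (co A) a b f.
Proof.
  unfold is_equivalence, invertible, cell_in. cbn.
  intros [g [t1 [t2 [[[A1 A2] [t1' [[B1 B2] [C1 C2]]]] [[D1 D2] [t2' [[E1 E2] [F1 F2]]]]]]]].
  exists g, t1', t2'. split.
  - split; [split; auto|]. exists t1. split; [split; auto|split; auto].
  - split; [split; auto|]. exists t2. split; [split; auto|split; auto].
Qed.

Lemma ef_co {e b : Ob A} (p : Hom e b) : effective_faithful p -> @effective_faithful (co A) e b p.
Proof.
  intros [K [HK [L [d [Ps [HL [pH [H1 [H2 H3]]]]]]]]].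
  exists (toco K). split; [apply cok_co; auto|].
  exists L, d, Ps. split; [apply lax_co; auto|].
  exists pH. split; [auto|]. split; [auto|]. apply equiv_co; auto.
Qed.

Lemma hcd_co {e b : Ob A} (p : Hom e b) :
  has_cokernel_diagram p -> @has_cokernel_diagram (co A) e b p.
Proof. intros [K HK]. exists (toco K). apply cok_co; auto. Qed.

Lemma adj_co {e b : Ob A} (p : Hom e b) :
  @has_left_adjoint (co A) e b p <-> has_right_adjoint p.
Proof.
  unfold has_left_adjoint, has_right_adjoint, is_adjunction, cell_in. cbn. split.
  - intros [l [et [ep [[H1 H2] [[H3 H4] [H5 H6]]]]]].
    exists l, ep, et. auto 10.
  - intros [r [et [ep [[H1 H2] [[H3 H4] [H5 H6]]]]]].
    exists r, ep, et. auto 10.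
Qed.

End Dual.

Definition fromco {A : TwoCat} {e b : Ob A} {p : Hom e b} (K : @CokData (co A) e b p) :
  @CokData A e b p :=
  @Build_CokData A e b p (@ck_P (co A) e b p K) (@ck_d1 (co A) e b p K)
     (@ck_d0 (co A) e b p K) (@ck_al (co A) e b p K)
     (@ck_Q (co A) e b p K) (@ck_D2 (co A) e b p K) (@ck_D1 (co A) e b p K)
     (@ck_D0 (co A) e b p K) (@ck_s0 (co A) e b p K).

Lemma ef_unco {A : TwoCat} {e b : Ob A} (p : Hom e b) :
  @effective_faithful (co A) e b p -> effective_faithful p.
Proof.
  intros [K [HK [L [d [Ps [HL [pH [H1 [H2 H3]]]]]]]]].
  exists (fromco K). split; [exact (cok_co (A := co A) p K HK)|].
  exists L, d, Ps. split; [exact (lax_co (A := co A) K d Ps HL)|].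
  exists pH. split; [exact H1|]. split; [exact H2|]. exact (equiv_co (A := co A) pH H3).
Qed.

Theorem corollary5p11 (A : TwoCat) (e b : Ob A) (p : Hom e b) :
  has_cokernel_diagram p ->
  (monadic p <-> has_left_adjoint p /\ effective_faithful p) /\
  (comonadic p <-> has_right_adjoint p /\ effective_faithful p).
Proof.
  intros HK. split; [apply monadic_iff; auto|].
  unfold comonadic. rewrite (monadic_iff (A := co A) p (hcd_co p HK)).
  rewrite adj_co. split; intros [H1 H2]; split; auto.
  - apply ef_unco; auto.
  - apply ef_co; auto.
Qed.
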